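(* There is an absolute constant $c>0$ such that the following holds. Let $k\ge1$, let $V$ be the vertex set of $Dec_kC$, and let $\emptyset\ne S\subseteq V$. Put $\sigma=|S|/|V|$ and $\sigma_i=|S\cap l_i|/|l_i|$ for $1\le i\le k+1$. If there exists $i$ with $|\sigma-\sigma_i|\ge\sigma/10$, then $$|E(S,V\setminus S)|\ge c\cdot 6\cdot|S|\cdot\left(\frac47\right)^k.$$
   Context: Let $D$ be the bipartite graph with product vertices $m_1,\dots,m_7$, output vertices $c_1,c_2,c_3,c_4$, and edges $c_1m_1,c_1m_4,c_1m_5,c_1m_7$, $c_2m_3,c_2m_5$, $c_3m_2,c_3m_4$, $c_4m_1,c_4m_2,c_4m_3,c_4m_6$. These encode Strassen's formulas for $C_{11},C_{12},C_{21},C_{22}$ in terms of $M_1,\dots,M_7$. For $k\ge1$, $Dec_kC$ is the undirected graph on the disjoint union of levels $l_1,\dots,l_{k+1}$. Level $l_i$ is the set of words $w_1\cdots w_k$ with $w_1,\dots,w_{k-i+1}\in\{1,2,3,4\}$ and $w_{k-i+2},\dots,w_k\in\{1,\dots,7\}$, so $|l_i|=4^{k-i+1}7^{i-1}$. For $u\in l_i$, $v\in l_{i+1}$ ($1\le i\le k$) and $p=k-i+1$, the pair $uv$ is an edge iff $u_t=v_t$ for all $t\neq p$ and $c_{u_p}m_{v_p}$ is an edge of $D$. There are no other edges. Maximum degree is $6$. $E(A,B)$ denotes the set of edges with one endpoint in $A$ and the other in $B$. *)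

(* Defs.v *)
From HB Require Import structures.
From mathcomp Require Import all_boot all_order all_algebra.
Set Implicit Arguments. Unset Strict Implicit. Unset Printing Implicit Defensive.
Import Order.TTheory GRing.Theory Num.Theory.

(* Conventions (0-indexed):
   product vertex m_{b+1} is b : 'I_7, output vertex c_{a+1} is a (a < 4).
   Level l_{i0+1} is indexed by i0 : 'I_(k.+1).
   Word position t (1-indexed) is t-1 : 'I_k. *)

(* Edges c_{a+1} m_{b+1} of the Strassen bipartite graph D. *)
Definition Dedge (a b : nat) : bool :=
  match a with
  | 0 => b \in [:: 0; 3; 4; 6]
  | 1 => b \in [:: 2; 4]
  | 2 => b \in [:: 1; 3]
  | 3 => b \in [:: 0; 1; 2; 5]
  | _ => false
  end%N.

(* Ambient type: (level index i0, word w). *)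
Definition DecT (k : nat) : finType := ('I_k.+1 * {ffun 'I_k -> 'I_7})%type.

(* (i0, w) is a vertex of level l_{i0+1}: positions t0 < k - i0 (i.e. 1-indexed
   positions 1..k-i+1) have letters in {1..4}, the rest in {1..7}. *)
Definition validV k (v : DecT k) : bool :=
  [forall t : 'I_k, (t < k - v.1)%N ==> (v.2 t < 4)%N].

Definition Vset k : {set DecT k} := [set v | validV v].

Definition level k (i : 'I_k.+1) : {set DecT k} :=
  [set v | validV v && (v.1 == i)].

(* Directed edge from u in l_i to v in l_{i+1}, with p = k-i+1 (1-indexed),
   i.e. p0 = k - i0 - 1 (0-indexed). *)
Definition upEdge k (u v : DecT k) : bool :=
  [&& validV u, validV v, (v.1 == u.1.+1 :> nat),
      [forall t : 'I_k, (t != k - u.1 - 1 :> nat) ==> (u.2 t == v.2 t)] &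
      [exists t : 'I_k, (t == k - u.1 - 1 :> nat) && Dedge (u.2 t) (v.2 t)]].

Definition adj k (u v : DecT k) : bool := upEdge u v || upEdge v u.

(* |E(A,B)|: number of edges with one endpoint in A and the other in B
   (A, B disjoint in our use, so ordered pairs count each edge once). *)
Definition cutE k (A B : {set DecT k}) : nat :=
  #|[set p : DecT k * DecT k | [&& p.1 \in A, p.2 \in B & adj p.1 p.2]]|.

(* Main.v *)
Require Import Defs.
From HB Require Import structures.
From mathcomp Require Import all_boot all_order all_algebra.
From mathcomp Require Import zify ring lra.
Import Order.TTheory GRing.Theory Num.Theory.
Set Implicit Arguments. Unset Strict Implicit. Unset Printing Implicit Defensive.

Definition upd n (g : {ffun 'I_n -> 'I_7}) (s0 : 'I_n) (a : 'I_7) :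
  {ffun 'I_n -> 'I_7} := [ffun s => if s == s0 then a else g s].

Definition pos n (t : nat) : 'I_n.+1 := inord (n - t).

Definition Gs n t : {set {ffun 'I_n.+1 -> 'I_7}} :=
  [set g | validV ((inord t.+1 : 'I_n.+2), g) && (g (pos n t) == ord0)].

Lemma validP k (v : DecT k) :
  reflect (forall s : 'I_k, (s < k - v.1)%N -> (v.2 s < 4)%N) (validV v).
Proof.
apply: (iffP forallP) => H s; first by move/implyP: (H s).
by apply/implyP; exact: H.
Qed.

Lemma updE n (g : {ffun 'I_n -> 'I_7}) (s0 s : 'I_n) a : upd g s0 a s = if s == s0 then a else g s.
Proof. by rewrite ffunE. Qed.

Lemma posE n t : (t < n.+1)%N -> pos n t = n - t :> nat.
Proof. move=> ht; rewrite /pos inordK //; lia. Qed.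

Lemma upd_inj n (g : {ffun 'I_n -> 'I_7}) (s0 : 'I_n) : injective (upd g s0).
Proof. by move=> a b /ffunP /(_ s0); rewrite !updE eqxx. Qed.

Lemma updK n (g : {ffun 'I_n -> 'I_7}) (s0 : 'I_n) a : g s0 = ord0 -> upd (upd g s0 a) s0 ord0 = g.
Proof.
by move=> h; apply/ffunP=> s; rewrite !updE; case: eqP => // ->.
Qed.

Lemma updV n (w : {ffun 'I_n -> 'I_7}) (s0 : 'I_n) : upd (upd w s0 ord0) s0 (w s0) = w.
Proof.
by apply/ffunP=> s; rewrite !updE; case: eqP => // ->.
Qed.

Lemma inordt n t : (t < n.+2)%N -> ((inord t : 'I_n.+2) : nat) = t.
Proof. by move=> h; rewrite inordK. Qed.

Lemma F1_lo n (A : {set DecT n.+1}) t : (t < n.+1)%N ->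
  #|A :&: level (inord t)| =
  \sum_(g in Gs n t) #|[set a : 'I_7 | (a < 4)%N && (((inord t, upd g (pos n t) a) : DecT n.+1) \in A)]|.
Proof.
move=> ht.
rewrite -sum1_card (partition_big (fun v : DecT n.+1 => upd v.2 (pos n t) ord0) (mem (Gs n t))) /=.
- apply: eq_bigr => g Hg.
  rewrite sum1dep_card.
  have inj : injective (fun a => ((inord t, upd g (pos n t) a) : DecT n.+1)).
    by move=> a b [] /upd_inj.
  rewrite -(card_imset _ inj). apply: eq_card => v.
  move: Hg; rewrite !inE => /andP [/validP Hgv /eqP Hg0].
  apply/idP/imsetP.
  + case/andP => /andP [vA /andP [/validP vv /eqP v1]] /eqP <-.
    case: v vA vv v1 => i w /= vA vv v1; subst i.
    exists (w (pos n t)); last by rewrite updV.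
    rewrite inE updV vA andbT; apply: vv; rewrite posE // inordK //; lia.
  + case=> a; rewrite inE => /andP [a4 aA] ->.
    rewrite aA /= eqxx updK // eqxx andbT andbT.
    apply/validP => s /=; rewrite inordK ?updE; last lia.
    move=> hs; case: eqP => // hsp.
    apply: Hgv => /=; rewrite inordK; last lia.
    have : (s : nat) <> pos n t by move=> h; apply: hsp; apply: val_inj.
    rewrite posE //; lia.
- move=> v; rewrite !inE => /andP [_ /andP [/validP vv /eqP v1]].
  rewrite updE eqxx andbT.
  apply/validP => s /=; rewrite inordK ?updE; last lia.
  move=> hs; case: eqP => // hsp.
  apply: vv; rewrite v1 inordK; lia.
Qed.

Lemma F1_hi n (A : {set DecT n.+1}) t : (t < n.+1)%N ->
  #|A :&: level (inord t.+1)| =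
  \sum_(g in Gs n t) #|[set b : 'I_7 | ((inord t.+1, upd g (pos n t) b) : DecT n.+1) \in A]|.
Proof.
move=> ht.
rewrite -sum1_card (partition_big (fun v : DecT n.+1 => upd v.2 (pos n t) ord0) (mem (Gs n t))) /=.
- apply: eq_bigr => g Hg.
  rewrite sum1dep_card.
  have inj : injective (fun a => ((inord t.+1, upd g (pos n t) a) : DecT n.+1)).
    by move=> a b [] /upd_inj.
  rewrite -(card_imset _ inj).
  apply: eq_card => v.
  move: Hg; rewrite !inE => /andP [/validP Hgv /eqP Hg0].
  apply/idP/imsetP.
  + case/andP => /andP [vA /andP [/validP vv /eqP v1]] /eqP <-.
    case: v vA vv v1 => i w /= vA vv v1; subst i.
    exists (w (pos n t)); last by rewrite updV.
    by rewrite inE updV vA.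
  + case=> a; rewrite inE => aA ->.
    rewrite aA /= eqxx updK // eqxx andbT andbT.
    apply/validP => s /=; rewrite inordK ?updE; last lia.
    move=> hs; case: eqP => hsp.
    * exfalso; move: hs; rewrite hsp posE //; lia.
    apply: Hgv => /=; rewrite inordK //; lia.
- move=> v; rewrite !inE => /andP [_ /andP [/validP vv /eqP v1]].
  rewrite updE eqxx andbT.
  apply/validP => s /=; rewrite inordK ?updE; last lia.
  move=> hs; case: eqP => // hsp.
  apply: vv; rewrite v1 inordK; lia.
Qed.

Lemma card_V k (A : {set DecT k}) :
  #|A :&: Vset k| = \sum_(i : 'I_k.+1) #|A :&: level i|.
Proof.
rewrite -sum1_card (partition_big (fun v : DecT k => v.1) predT) //=.
apply: eq_bigr => i _; rewrite sum1dep_card; apply: eq_card => v.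
by rewrite !inE andbA.
Qed.

Lemma core (p0 p1 p2 p3 q0 q1 q2 q3 q4 q5 q6 m : bool) :
  (m || [&& p0 == q0, p0 == q3, p0==q4, p0==q6, p1 == q2, p1==q4, p2==q1, p2==q3,
          p3==q0, p3==q1, p3==q2 & p3==q5]) ==>
  ((7 * (p0+p1+p2+p3) <= 4*(q0+q1+q2+q3+q4+q5+q6) + 28 * m) &&
   (4*(q0+q1+q2+q3+q4+q5+q6) <= 7 * (p0+p1+p2+p3) + 28 * m))%N.
Proof. by case: p0; case: p1; case: p2; case: p3; case: q0; case: q1; case: q2; case: q3; case: q4; case: q5; case: q6; case: m. Qed.

Lemma card7 (B : pred 'I_7) : #|[set a | B a]| =
  (B (inord 0) + B (inord 1) + B (inord 2) + B (inord 3) + B (inord 4) + B (inord 5) + B (inord 6))%N.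
Proof.
rewrite -sum1dep_card big_mkcond /=.
rewrite (eq_bigr (fun i : 'I_7 => nat_of_bool (B (inord i)))); last first.
  by move=> i _; rewrite inord_val; case: (B i).
rewrite !big_ord_recl big_ord0 /=.
have e : forall i, bump 0 i = i.+1 by [].
rewrite !e; lia.
Qed.

Lemma copy_bound (P Q : 'I_7 -> bool) (m : bool) :
 (~~ m -> forall a b : 'I_7, (a < 4)%N -> Dedge a b -> P a = Q b) ->
 (7 * #|[set a : 'I_7 | (a < 4)%N && P a]| <= 4 * #|[set b : 'I_7 | Q b]| + 28 * m)%N /\
 (4 * #|[set b : 'I_7 | Q b]| <= 7 * #|[set a : 'I_7 | (a < 4)%N && P a]| + 28 * m)%N.
Proof.
move=> H; rewrite !card7 !inordK //= !addn0.
have := core (P (inord 0)) (P (inord 1)) (P (inord 2)) (P (inord 3)) (Q (inord 0))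
  (Q (inord 1)) (Q (inord 2)) (Q (inord 3)) (Q (inord 4)) (Q (inord 5)) (Q (inord 6)) m.
case: m H => H; first by move=> /implyP /(_ isT) /andP [-> ->].
have E : forall a b, (a < 4)%N -> (b < 7)%N -> Dedge a b -> P (inord a) == Q (inord b).
  by move=> a b ha hb hd; apply/eqP; apply: H; rewrite ?inordK //; lia.
rewrite !E // => /andP [-> ->]; by [].
Qed.

Lemma valid_lo n t (g : {ffun 'I_n.+1 -> 'I_7}) (a : 'I_7) : (t < n.+1)%N -> g \in Gs n t -> (a < 4)%N ->
  validV ((inord t, upd g (pos n t) a) : DecT n.+1).
Proof.
move=> ht; rewrite inE => /andP [/validP Hgv /eqP Hg0] a4.
apply/validP => s /=; rewrite inordK ?updE; last lia.
move=> hs; case: eqP => // hsp.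
apply: Hgv => /=; rewrite inordK; last lia.
have : (s : nat) <> pos n t by move=> h; apply: hsp; apply: val_inj.
rewrite posE //; lia.
Qed.

Lemma valid_hi n t (g : {ffun 'I_n.+1 -> 'I_7}) (b : 'I_7) : (t < n.+1)%N -> g \in Gs n t ->
  validV ((inord t.+1, upd g (pos n t) b) : DecT n.+1).
Proof.
move=> ht; rewrite inE => /andP [/validP Hgv /eqP Hg0].
apply/validP => s /=; rewrite inordK ?updE; last lia.
move=> hs; case: eqP => hsp.
  exfalso; move: hs; rewrite hsp posE //; lia.
apply: Hgv => /=; rewrite inordK //; lia.
Qed.

Lemma edge_copy n t (g : {ffun 'I_n.+1 -> 'I_7}) (a b : 'I_7) : (t < n.+1)%N -> g \in Gs n t ->
  (a < 4)%N -> Dedge a b ->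
  adj ((inord t, upd g (pos n t) a) : DecT n.+1) (inord t.+1, upd g (pos n t) b) /\
  adj ((inord t.+1, upd g (pos n t) b) : DecT n.+1) (inord t, upd g (pos n t) a).
Proof.
move=> ht hg a4 hd.
suff H : upEdge ((inord t, upd g (pos n t) a) : DecT n.+1) (inord t.+1, upd g (pos n t) b).
  by rewrite /adj H orbT.
apply/and5P; split.
- exact: valid_lo.
- exact: valid_hi.
- by rewrite /= !inordK //; lia.
- apply/forallP => s; apply/implyP => hs /=; rewrite !updE.
  case: (s =P pos n t) => // hsp; exfalso; move/negP: hs; apply.
  by rewrite hsp /= inordK ?posE //; [apply/eqP; lia | lia].
- apply/existsP; exists (pos n t); rewrite /= !updE eqxx hd andbT.
  by rewrite inordK ?posE //; [apply/eqP; lia | lia].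
Qed.

Definition uL n t (g : {ffun 'I_n.+1 -> 'I_7}) a : DecT n.+1 := (inord t, upd g (pos n t) a).
Definition vL n t (g : {ffun 'I_n.+1 -> 'I_7}) b : DecT n.+1 := (inord t.+1, upd g (pos n t) b).

Definition mixed n (S : {set DecT n.+1}) (t : nat) g : bool :=
  [exists a : 'I_7, exists b : 'I_7,
     [&& (a < 4)%N, Dedge a b & (uL t g a \in S) != (vL t g b \in S)]].

Definition Zs n (S : {set DecT n.+1}) : {set 'I_n.+1 * {ffun 'I_n.+1 -> 'I_7}} :=
  [set tg : 'I_n.+1 * {ffun 'I_n.+1 -> 'I_7} | (tg.2 \in Gs n tg.1) && mixed S tg.1 tg.2].

Definition fE n (S : {set DecT n.+1}) (tg : 'I_n.+1 * {ffun 'I_n.+1 -> 'I_7}) :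
  DecT n.+1 * DecT n.+1 :=
  let t := (tg.1 : nat) in let g := tg.2 in
  match [pick ab : 'I_7 * 'I_7 | [&& (ab.1 < 4)%N, Dedge ab.1 ab.2 &
          (uL t g ab.1 \in S) != (vL t g ab.2 \in S)]] with
  | Some ab => if uL t g ab.1 \in S then (uL t g ab.1, vL t g ab.2)
               else (vL t g ab.2, uL t g ab.1)
  | None => (uL t g ord0, uL t g ord0)
  end.

Definition hE n (p : DecT n.+1 * DecT n.+1) : 'I_n.+1 * {ffun 'I_n.+1 -> 'I_7} :=
  let w := if (p.1.1 < p.2.1)%N then p.1 else p.2 in
  (inord w.1, upd w.2 (pos n w.1) ord0).

Lemma hfE n (S : {set DecT n.+1}) tg : tg \in Zs S -> hE (fE S tg) = tg.
Proof.
case: tg => t g; rewrite inE /= => /andP [hg hm].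
have ht := ltn_ord t.
have hw : forall a, hE (uL t g a, vL t g a) = (t, g) /\ forall b, hE (uL t g a, vL t g b) = (t, g) /\ hE (vL t g b, uL t g a) = (t, g).
  move=> a; move: hg; rewrite inE => /andP [_ /eqP Hg0].
  have e1 : forall b, hE (uL t g a, vL t g b) = (t, g).
    move=> b; rewrite /hE /uL /vL /= !inordK //; last lia.
    rewrite ltnSn /= inordK; last lia.
    by rewrite updK // inord_val.
  split; first exact: e1.
  move=> b; split; first exact: e1.
  rewrite /hE /uL /vL /= !inordK //; last lia.
  have -> : (t.+1 < t)%N = false by lia.
  rewrite /= inordK; last lia.
  by rewrite updK // inord_val.
rewrite /fE /=; case: pickP => [[a b] /= /and3P [a4 hd hne]|].
  have [_ /(_ b) [e1 e2]] := hw a.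
  by case: (uL t g a \in S).
by move=> H; exfalso; case/existsP: hm => a /existsP [b hab]; move: (H (a, b)); rewrite /= hab.
Qed.

Lemma fE_cut n (S : {set DecT n.+1}) tg : tg \in Zs S ->
  [&& (fE S tg).1 \in S, (fE S tg).2 \in Vset n.+1 :\: S & adj (fE S tg).1 (fE S tg).2].
Proof.
case: tg => t g; rewrite inE /= => /andP [hg hm].
have ht := ltn_ord t.
rewrite /fE /=; case: pickP => [[a b] /= /and3P [a4 hd hne]|]; last first.
  by move=> H; exfalso; case/existsP: hm => a /existsP [b hab]; move: (H (a, b)); rewrite /= hab.
have [e1 e2] := edge_copy ht hg a4 hd.
have vu : uL t g a \in Vset n.+1 by rewrite inE; apply: valid_lo.
have vv : vL t g b \in Vset n.+1 by rewrite inE; apply: valid_hi.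
case: ifP => hu /=.
  move: hne vv; rewrite hu !inE; case: (vL t g b \in S) => //= _ -> /=.
  exact: e1.
move: hne vu; rewrite hu !inE; case: (vL t g b \in S) => //= _ -> /=.
by rewrite hu andbT.
Qed.

Lemma cut_ge n (S : {set DecT n.+1}) : (#|Zs S| <= cutE S (Vset n.+1 :\: S))%N.
Proof.
rewrite -(card_in_imset (can_in_inj (@hfE n S))).
apply: subset_leq_card; apply/subsetP => p /imsetP [tg hz ->].
by rewrite inE; apply: fE_cut.
Qed.

Lemma step_S n (S : {set DecT n.+1}) t : (t < n.+1)%N ->
  let x := #|S :&: level (inord t)| in let y := #|S :&: level (inord t.+1)| in
  let M := (\sum_(g in Gs n t) mixed S t g)%N in
  (7 * x <= 4 * y + 28 * M)%N /\ (4 * y <= 7 * x + 28 * M)%N.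
Proof.
move=> ht /=; rewrite F1_lo // F1_hi //.
rewrite !big_distrr /= -!big_split /=.
have H : forall g, g \in Gs n t ->
  (7 * #|[set a : 'I_7 | (a < 4)%N && (uL t g a \in S)]| <= 4 * #|[set b : 'I_7 | vL t g b \in S]| + 28 * mixed S t g)%N /\
  (4 * #|[set b : 'I_7 | vL t g b \in S]| <= 7 * #|[set a : 'I_7 | (a < 4)%N && (uL t g a \in S)]| + 28 * mixed S t g)%N.
  move=> g _; apply: copy_bound => /existsPn Hm a b a4 hd.
  move/existsPn: (Hm a) => /(_ b); rewrite a4 hd /= negbK => /eqP //.
by split; apply: leq_sum => g hg; case: (H g hg).
Qed.

Lemma step_L n t : (t < n.+1)%N ->
  (4 * #|(level (inord t.+1) : {set DecT n.+1})| = 7 * #|(level (inord t) : {set DecT n.+1})|)%N.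
Proof.
move=> ht.
have := F1_lo setT ht; have := F1_hi setT ht; rewrite !setTI => -> ->.
rewrite (eq_bigr (fun _ => 7%N)); last first.
  by move=> g _; rewrite card7 !in_setT.
rewrite [in RHS](eq_bigr (fun _ => 4%N)); last first.
  by move=> g _; rewrite card7 !in_setT !inordK.
by rewrite !sum_nat_const; lia.
Qed.

Lemma sumZ n (S : {set DecT n.+1}) :
  #|Zs S| = (\sum_(t < n.+1) \sum_(g in Gs n t) mixed S t g)%N.
Proof.
rewrite -sum1_card big_mkcond /=.
rewrite [LHS](eq_bigr (fun p : 'I_n.+1 * {ffun 'I_n.+1 -> 'I_7} => if (p.1, p.2) \in Zs S then 1%N else 0%N)); last by case.
rewrite -(pair_bigA _ (fun t g => if (t, g) \in Zs S then 1%N else 0%N)) /=.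
apply: (@eq_bigr nat 0%N addn) => t _; rewrite [RHS]big_mkcond; apply: (@eq_bigr nat 0%N addn) => g _.
by rewrite inE /=; case: (g \in Gs n t); case: (mixed S t g).
Qed.

Local Open Scope ring_scope.

Lemma prefix_tel (f : nat -> rat) j :
  `|f 0%N - f j| <= \sum_(0 <= t < j) `|f t - f t.+1|.
Proof.
elim: j => [|j IH]; first by rewrite subrr normr0 big_geq.
rewrite big_nat_recr //=.
have e : f 0%N - f j.+1 = (f 0%N - f j) + (f j - f j.+1) by rewrite addrA subrK.
rewrite e; apply: (le_trans (ler_normD _ _)); exact: lerD.
Qed.

Lemma sub_sum (g : nat -> rat) j K : (j <= K)%N -> (forall t, 0 <= g t) ->
  \sum_(0 <= t < j) g t <= \sum_(0 <= t < K) g t.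
Proof.
move=> hj hg; rewrite (@big_cat_nat _ _ _ j 0%N K _ _ (leq0n j) hj) /= lerDl.
by apply: sumr_ge0 => t _.
Qed.

Lemma tel2 (f : nat -> rat) K i j : (i <= K)%N -> (j <= K)%N ->
  `|f i - f j| <= 2 * \sum_(0 <= t < K) `|f t - f t.+1|.
Proof.
move=> hi hj.
have h1 := le_trans (prefix_tel f i) (sub_sum hi (fun t => normr_ge0 _)).
have h2 := le_trans (prefix_tel f j) (sub_sum hj (fun t => normr_ge0 _)).
have e : f i - f j = - (f 0%N - f i) + (f 0%N - f j) by rewrite opprB addrA subrK.
rewrite e; apply: (le_trans (ler_normD _ _)); rewrite normrN; lra.
Qed.

Lemma geom K : \sum_(0 <= t < K.+1) (7/4 : rat) ^+ t <= 7/3 * (7/4) ^+ K.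
Proof.
elim: K => [|K IH]; first by rewrite big_nat1 expr0; lra.
rewrite big_nat_recr //= exprS.
have : 0 <= (7/4 : rat) ^+ K by apply: exprn_ge0; lra.
lra.
Qed.

Lemma step_lem (Lt L0 xt xt1 M : rat) : 0 < Lt -> L0 <= Lt ->
  `|7 * xt - 4 * xt1| <= 28 * M -> L0 * `|xt / Lt - xt1 / (Lt * (7/4))| <= 4 * M.
Proof.
move=> Lp hL0 H.
have e : 7 * xt - 4 * xt1 = (7 * Lt) * (xt / Lt - xt1 / (Lt * (7/4))).
  by field; rewrite gt_eqF.
rewrite e normrM (ger0_norm (x := 7 * Lt)) in H; last by rewrite mulr_ge0 // ltW.
have := ler_wpM2r (normr_ge0 (xt / Lt - xt1 / (Lt * (7/4)))) hL0.
move: H; set a := `|_|; move=> H1 H2.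
lra.
Qed.

Lemma avg_lem K (L x : nat -> rat) i B :
  (forall t, (t <= K)%N -> 0 < L t) ->
  (forall t, (t <= K)%N -> `|x t / L t - x i / L i| <= B) ->
  `|(\sum_(0 <= t < K.+1) x t) / (\sum_(0 <= t < K.+1) L t) - x i / L i| <= B.
Proof.
move=> Lp hB.
move: (x i / L i) hB => c hB.
have Vpos : 0 < \sum_(0 <= t < K.+1) L t.
  rewrite big_nat_recl //; have := Lp 0%N (leq0n K).
  have : 0 <= \sum_(0 <= t < K) L t.+1.
    by rewrite big_nat_cond; apply: sumr_ge0 => t /andP [/andP [_ ht] _]; apply: ltW; apply: Lp.
  lra.
have [Ss HS] : {Ss | Ss = \sum_(0 <= t < K.+1) x t} by exists (\sum_(0 <= t < K.+1) x t).
have [V HV] : {V | V = \sum_(0 <= t < K.+1) L t} by exists (\sum_(0 <= t < K.+1) L t).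
rewrite -HS -HV; rewrite -HV in Vpos.
have e : (Ss / V - c) * V = \sum_(0 <= t < K.+1) (L t * (x t / L t - c)).
  rewrite mulrBl divfK ?gt_eqF // HS HV mulr_sumr -sumrB.
  apply: eq_big_nat => t /andP [_ ht].
  have : L t != 0 by rewrite gt_eqF // Lp.
  move=> h; field.
  exact: h.
suff H : `|(Ss / V - c) * V| <= B * V.
  by rewrite normrM (ger0_norm (ltW Vpos)) ler_pM2r in H.
rewrite e.
apply: (le_trans (ler_norm_sum _ _ _)).
rewrite HV mulr_sumr; apply: ler_sum_nat => t /andP [_ ht].
rewrite normrM (ger0_norm (ltW (Lp t ht))) mulrC.
by apply: ler_wpM2r; [apply: ltW; apply: Lp | apply: hB].
Qed.

Lemma final_lem (sg U L0 G cut rK qK : rat) : rK * qK = 1 -> 0 < L0 -> 0 < G ->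
  G <= 7/3 * rK -> 0 <= qK -> 0 <= sg -> sg / 10 <= 2 * U -> L0 * U <= 4 * cut ->
  sg * (L0 * G) * qK <= 187 * cut.
Proof.
move=> hrq L0p Gp hG hq hsg hU hL.
have s1 : sg <= 20 * U by clear -hU; lra.
have U0 : 0 <= 20 * U by clear -hU hsg; lra.
have LG : 0 <= L0 * G by apply: mulr_ge0; apply: ltW.
have h1 := ler_wpM2r hq (ler_wpM2r LG s1).
have h3 := ler_wpM2l (ltW L0p) hG.
have h2 := ler_wpM2r hq (ler_wpM2l U0 h3).
have e : (20 * U) * (L0 * (7/3 * rK)) * qK = 140/3 * (L0 * U) * (rK * qK) by ring.
rewrite hrq mulr1 in e.
have w0 : 0 <= L0 * U by apply: mulr_ge0; [apply: ltW | clear -U0; lra].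
apply: (le_trans h1); apply: (le_trans h2); rewrite e.
move: (L0 * U) hL w0 => w hw1 hw2; clear -hw1 hw2; lra.
Qed.

Lemma analytic (K : nat) (L x M : nat -> rat) (cut : rat) (i : nat) :
 0 <= L 0%N -> (forall t, 0 <= x t) -> (forall t, (t < K)%N -> L t.+1 = L t * (7/4)) ->
 (forall t, (t < K)%N -> `|7 * x t - 4 * x t.+1| <= 28 * M t) ->
 \sum_(0 <= t < K) M t <= cut -> (i <= K)%N ->
 0 < \sum_(0 <= t < K.+1) L t ->
 (\sum_(0 <= t < K.+1) x t) / (\sum_(0 <= t < K.+1) L t) / 10 <=
   `|(\sum_(0 <= t < K.+1) x t) / (\sum_(0 <= t < K.+1) L t) - x i / L i| ->
 (\sum_(0 <= t < K.+1) x t) * (4/7) ^+ K <= 187 * cut.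
Proof.
move=> L0ge x0 hLs hx hM hi Vpos hyp.
have r0 : (0 : rat) < 7/4 by lra.
have r1 : (1 : rat) <= 7/4 by lra.
have hL : forall t, (t <= K)%N -> L t = L 0%N * (7/4) ^+ t.
  elim=> [|t IH] ht; first by rewrite expr0 mulr1.
  by rewrite (hLs t ht) (IH (ltnW ht)) -mulrA -exprSr.
have hV : \sum_(0 <= t < K.+1) L t = L 0%N * \sum_(0 <= t < K.+1) (7/4 : rat) ^+ t.
  rewrite mulr_sumr; apply: eq_big_nat => t /andP [_ ht]; exact: hL.
have G0 : 0 < \sum_(0 <= t < K.+1) (7/4 : rat) ^+ t.
  rewrite big_nat_recl; last exact: leq0n.
  rewrite expr0.
  have : 0 <= \sum_(0 <= t < K) (7/4 : rat) ^+ t.+1 by apply: sumr_ge0 => t _; apply: exprn_ge0; apply: ltW.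
  move=> h; clear -h; lra.
have L0pos : 0 < L 0%N.
  rewrite lt0r L0ge andbT; apply/eqP => h; move: Vpos; by rewrite hV h mul0r ltxx.
have Lpos : forall t, (t <= K)%N -> 0 < L t.
  by move=> t ht; rewrite (hL t ht); apply: mulr_gt0; [exact: L0pos | exact: exprn_gt0 _ r0].
have LgeL0 : forall t, (t <= K)%N -> L 0%N <= L t.
  move=> t ht; rewrite (hL t ht).
  rewrite -{1}(mulr1 (L 0%N)); apply: (ler_wpM2l L0ge).
  exact: exprn_ege1.
have [U HU] : {U | U = \sum_(0 <= t < K) `|x t / L t - x t.+1 / L t.+1|} by eexists.
have step : forall t, (t < K)%N -> L 0%N * `|x t / L t - x t.+1 / L t.+1| <= 4 * M t.
  move=> t ht; rewrite (hLs t ht); apply: step_lem.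
  - by apply: Lpos; apply: ltnW.
  - by apply: LgeL0; apply: ltnW.
  - exact: hx.
have UL : L 0%N * U <= 4 * cut.
  rewrite HU mulr_sumr.
  apply: (le_trans (ler_sum_nat (fun t ht => step t (proj2 (andP ht))))).
  rewrite -mulr_sumr; exact: (ler_wpM2l _ hM).
have avg : `|(\sum_(0 <= t < K.+1) x t) / (\sum_(0 <= t < K.+1) L t) - x i / L i| <= 2 * U.
  apply: avg_lem; first exact: Lpos.
  move=> t ht; rewrite HU.
  exact: (tel2 (fun t => x t / L t) ht hi).
have sg0 : 0 <= (\sum_(0 <= t < K.+1) x t) / (\sum_(0 <= t < K.+1) L t).
  by apply: divr_ge0; [apply: sumr_ge0 => t _ | apply: ltW].
have hU := le_trans hyp avg.
have e : (\sum_(0 <= t < K.+1) x t) = (\sum_(0 <= t < K.+1) x t) / (\sum_(0 <= t < K.+1) L t) *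
   (L 0%N * \sum_(0 <= t < K.+1) (7/4 : rat) ^+ t).
  by rewrite -hV (divfK (lt0r_neq0 Vpos)).
rewrite [X in X * _]e.
have q0 : 0 <= (4/7 : rat) ^+ K by apply: exprn_ge0; lra.
have rq : (7/4 : rat) ^+ K * (4/7) ^+ K = 1.
  rewrite -exprMn.
  have -> : (7/4 : rat) * (4/7) = 1 by lra.
  by rewrite expr1n.
exact: (final_lem rq L0pos G0 (geom K) q0 sg0 hU UL).
Qed.


Unset Implicit Arguments.

Lemma sum_levels n (A : {set DecT n.+1}) : A \subset Vset n.+1 ->
  (#|A|%:R : rat) = \sum_(0 <= t < n.+2) (#|A :&: level (inord t)|%:R).
Proof.
move=> hA; rewrite -{1}(setIidPl hA) card_V natr_sum big_mkord.
by apply: eq_bigr => i _; rewrite inord_val.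
Qed.

Theorem mainTheorem7 :
  exists c : rat, 0 < c /\
  forall (k : nat) (S : {set DecT k}),
    (1 <= k)%N ->
    S \subset Vset k ->
    S != set0 ->
    let sigma : rat := #|S|%:R / #|Vset k|%:R in
    (exists i : 'I_k.+1,
        sigma / 10 <= `| sigma - #|S :&: level i|%:R / #|level i|%:R |) ->
    c * 6 * #|S|%:R * (4%:R / 7%:R) ^+ k <= (cutE S (Vset k :\: S))%:R.
Proof.
exists (1/2000); split; first by lra.
case=> [|n] S hk; first by exfalso; exact: (negP (negbT (ltnn 0)) hk).
move=> hSV hS0 sigma [i hi].
pose L := fun t : nat => (#|(level (inord t) : {set DecT n.+1})|%:R : rat).
pose x := fun t : nat => (#|S :&: level (inord t)|%:R : rat).
pose M := fun t : nat => ((\sum_(g in Gs n t) mixed S t g)%N%:R : rat).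
have hSx : (#|S|%:R : rat) = \sum_(0 <= t < n.+2) x t by exact: sum_levels.
have hVL : (#|Vset n.+1|%:R : rat) = \sum_(0 <= t < n.+2) L t.
  rewrite (@sum_levels n (Vset n.+1) (subxx _)); apply: eq_big_nat => t _.
  rewrite /L (setIidPr _) //; apply/subsetP => v; rewrite !inE => /andP [-> _] //.
have hlev : forall t, (t < n.+1)%N -> L t.+1 = L t * (7/4).
  move=> t ht; have h := @step_L n t ht.
  have h' : ((4 * #|(level (inord t.+1) : {set DecT n.+1})|)%N%:R : rat) =
            (7 * #|(level (inord t) : {set DecT n.+1})|)%N%:R by rewrite h.
  rewrite !(natrM rat) in h'; rewrite /L.
  move: h'; move: (#|(level (inord t.+1) : {set DecT n.+1})|%:R : rat) => a.
  move: (#|(level (inord t) : {set DecT n.+1})|%:R : rat) => b h'.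
  clear -h'; lra.
have hxb : forall t, (t < n.+1)%N -> `|7 * x t - 4 * x t.+1| <= 28 * M t.
  move=> t ht; have /= [h1 h2] := @step_S n S t ht.
  move: h1 h2; rewrite /x /M.
  move: #|S :&: level (inord t)| => X; move: #|S :&: level (inord t.+1)| => Y.
  move: (\sum_(g in Gs n t) mixed S t g)%N => Mn h1 h2.
  rewrite -(ler_nat rat) (natrD rat (4 * Y) (28 * Mn)) (natrM rat 4 Y) (natrM rat 28 Mn) (natrM rat 7 X) in h1.
  rewrite -(ler_nat rat) (natrD rat (7 * X) (28 * Mn)) (natrM rat 4 Y) (natrM rat 28 Mn) (natrM rat 7 X) in h2.
  rewrite ler_norml.
  move: h1 h2; move: (X%:R : rat) => a; move: (Y%:R : rat) => b; move: (Mn%:R : rat) => c h1 h2.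
  by apply/andP; split; clear -h1 h2; lra.
have hM : \sum_(0 <= t < n.+1) M t <= (cutE S (Vset n.+1 :\: S))%:R.
  rewrite /M -natr_sum ler_nat big_mkord -sumZ; exact: cut_ge.
have Vpos : 0 < \sum_(0 <= t < n.+2) L t.
  rewrite -hVL ltr0n; apply: (@leq_trans #|S|); last exact: subset_leq_card.
  by rewrite card_gt0.
have e1 : x i = #|S :&: level i|%:R by rewrite /x inord_val.
have e2 : L i = #|level i|%:R by rewrite /L inord_val.
rewrite /sigma hSx hVL -e1 -e2 in hi.
have H := @analytic n.+1 L x M (cutE S (Vset n.+1 :\: S))%:R i (ler0n _ _)
  (fun t => ler0n _ _) hlev hxb hM (ltn_ord i) Vpos hi.
rewrite hSx.
have q0 : 0 <= (4/7 : rat) ^+ n.+1 by apply: exprn_ge0; lra.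
have A0 : 0 <= \sum_(0 <= t < n.+2) x t by apply: sumr_ge0 => t _; exact: ler0n.
have AQ := mulr_ge0 A0 q0.
have c0 : (0 : rat) <= (cutE S (Vset n.+1 :\: S))%:R by exact: ler0n.
move: H AQ c0; move: ((cutE S (Vset n.+1 :\: S))%:R : rat) => c.
move: (\sum_(0 <= t < n.+2) x t) => A.
move: ((4/7 : rat) ^+ n.+1) => q H AQ c0.
clear -H AQ c0; lra.
Qed.
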